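(* Let $\mathcal{T}$ be a tangle of order $k$ in a connectivity system $(E,\lambda)$. Let $X$ be a $\mathcal{T}$-strong $k$-separating set, and let $(X_i)_{i=1}^m$ be a partial $k$-sequence for $X$. Then $\mathrm{fcl}_{\mathcal{T}}(X)=X\cup \bigcup_{i=1}^m X_i$ if and only if $(X_i)_{i=1}^m$ is maximal.
   Context: A connectivity system is a pair $(E,\lambda)$ with $E$ finite and $\lambda$ an integer-valued symmetric submodular function on subsets of $E$. $X$ is $k$-separating if $\lambda(X)\le k$. A tangle of order $k$ is a collection $\mathcal T$ of subsets of $E$ with (T1) $\lambda(A)<k$ for $A\in\mathcal T$; (T2) if $\lambda(A)\le k-1$ then $A\in\mathcal T$ or $E-A\in\mathcal T$; (T3) $A\cup B\cup C\ne E$ for $A,B,C\in\mathcal T$; (T4) $E-\{e\}\notin\mathcal T$ for $e\in E$. A set is $\mathcal T$-weak if contained in a member of $\mathcal T$, and $\mathcal T$-strong otherwise. A $\mathcal T$-strong $k$-separating set $X$ is fully closed if $X\cup Y$ is not $k$-separating for every nonempty $\mathcal T$-weak $Y\subseteq E-X$; $\mathrm{fcl}_{\mathcal T}(X)$ is the intersection of all fully closed $k$-separating sets containing $X$. A partial $k$-sequence for $X$ is a sequence $(X_i)_{i=1}^m$ of pairwise disjoint nonempty $\mathcal T$-weak subsets of $E-X$ such that $X\cup\bigcup_{i=1}^jX_i$ is $k$-separating for all $j\le m$. It is maximal if $X\cup\bigcup_{i=1}^m X_i$ is maximal under inclusion among all sets of the form $X\cup\bigcup_{i=1}^{n}Y_i$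 with $(Y_i)_{i=1}^n$ a partial $k$-sequence for $X$. *)

(* Defs.v *)
From mathcomp Require Import all_boot all_order all_algebra.
Set Implicit Arguments. Unset Strict Implicit. Unset Printing Implicit Defensive.
Import Order.TTheory GRing.Theory Num.Theory.
Local Open Scope ring_scope.

Definition connectivity_system (E : finType) (lambda : {set E} -> int) : Prop :=
  (forall A : {set E}, lambda (~: A) = lambda A) /\
  (forall A B : {set E}, lambda (A :|: B) + lambda (A :&: B) <= lambda A + lambda B).

Definition kseparating (E : finType) (lambda : {set E} -> int) (k : int) (X : {set E}) : Prop :=
  lambda X <= k.

Definition tangle (E : finType) (lambda : {set E} -> int) (k : int) (T : {set {set E}}) : Prop :=
  [/\ (forall A, A \in T -> lambda A < k),
      (forall A, lambda A <= k - 1 -> A \in T \/ ~: A \in T),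
      (forall A B C, A \in T -> B \in T -> C \in T -> A :|: B :|: C != setT)
    & (forall e : E, ~: [set e] \notin T)].

Definition weak (E : finType) (T : {set {set E}}) (Y : {set E}) : bool :=
  [exists A in T, Y \subset A].

Definition strong (E : finType) (T : {set {set E}}) (Y : {set E}) : bool :=
  ~~ weak T Y.

Definition fully_closed (E : finType) (lambda : {set E} -> int) (k : int)
  (T : {set {set E}}) (X : {set E}) : bool :=
  [&& strong T X, lambda X <= k &
      [forall Y : {set E}, [&& Y != set0, weak T Y & Y \subset ~: X] ==>
        ~~ (lambda (X :|: Y) <= k)]].

(* fcl_T(X): intersection of all fully closed k-separating sets containing X
   (the intersection of the empty family is E). *)
Definition fcl (E : finType) (lambda : {set E} -> int) (k : int)
  (T : {set {set E}}) (X : {set E}) : {set E} :=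
  \bigcap_(Y : {set E} | fully_closed lambda k T Y && (X \subset Y)) Y.

Definition seq_union (E : finType) (s : seq {set E}) : {set E} :=
  \bigcup_(Y <- s) Y.

Definition partial_kseq (E : finType) (lambda : {set E} -> int) (k : int)
  (T : {set {set E}}) (X : {set E}) (s : seq {set E}) : Prop :=
  [/\ (forall i j, (i < j < size s)%N -> [disjoint nth set0 s i & nth set0 s j]),
      (forall Y, Y \in s -> [/\ Y != set0, weak T Y & Y \subset ~: X])
    & (forall j, (j <= size s)%N -> kseparating lambda k (X :|: seq_union (take j s)))].

Definition maximal_kseq (E : finType) (lambda : {set E} -> int) (k : int)
  (T : {set {set E}}) (X : {set E}) (s : seq {set E}) : Prop :=
  forall t : seq {set E}, partial_kseq lambda k T X t ->
    ~ ((X :|: seq_union s) \proper (X :|: seq_union t)).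

(* Main.v *)
Require Import Defs.
From mathcomp Require Import all_boot all_order all_algebra.
From mathcomp Require Import zify.
Set Implicit Arguments. Unset Strict Implicit.
Import Order.TTheory GRing.Theory Num.Theory.
Local Open Scope ring_scope.

Lemma lam_min (E : finType) (lambda : {set E} -> int) :
  connectivity_system lambda -> forall A, lambda set0 <= lambda A.
Proof.
case=> sym sub A.
have h := sub A (~: A); rewrite setUCr setICr in h.
have h1 := sym set0; rewrite setC0 in h1.
have h2 := sym A. rewrite h1 h2 in h. lia.
Qed.

Lemma weak_sub (E : finType) (T : {set {set E}}) (A B : {set E}) :
  B \subset A -> weak T A -> weak T B.
Proof.
move=> BA /existsP [C /andP [CT AC]]; apply/existsP; exists C.
by rewrite CT (subset_trans BA AC).
Qed.

Lemma fc_step (E : finType) (lambda : {set E} -> int) (k : int)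
  (T : {set {set E}}) (X Y Z : {set E}) :
  connectivity_system lambda -> tangle lambda k T -> strong T X ->
  fully_closed lambda k T Y -> X \subset Y -> X \subset Z -> lambda Z <= k ->
  weak T (Z :\: Y) -> Z \subset Y.
Proof.
move=> cs [t1 t2 t3 t4] sX /and3P [sY lY /forallP fY] XY XZ lZ wW.
rewrite -setD_eq0; apply/negPn/negP => W0.
have := fY (Z :\: Y); rewrite W0 wW /= subDset setUCr subsetT /= => /negP hW.
have eU : Y :|: Z :\: Y = Y :|: Z by rewrite setDE setUIr setUCr setIT.
rewrite eU in hW.
have csub := cs.2 Y Z.
have hI : lambda (Y :&: Z) <= k - 1.
  have h : ~ (lambda (Y :|: Z) <= k) by move/idP.
  lia.
case: (t2 _ hI) => hT.
  move/negP: sX; apply; apply/existsP; exists (Y :&: Z); by rewrite hT subsetI XY XZ.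
have wY : weak T (~: Y).
  apply: weak_sub (_ : ~: Y \subset ~: (Y :&: Z)) _; first by rewrite setCS subsetIl.
  by apply/existsP; exists (~: (Y :&: Z)); rewrite hT subxx.
case: (eqVneq (~: Y) set0) => hY.
  move/negP: W0; apply; apply/eqP; apply/setP => x; rewrite !inE.
  by apply/negP => /andP [xY _]; move/setP: hY => /(_ x); rewrite !inE xY.
have := fY (~: Y); rewrite hY wY subxx setUCr /= => /negP h.
apply: h. have := lam_min cs Y. have := cs.1 set0. rewrite setC0 => ->. lia.
Qed.

Lemma su_take_succ (E : finType) (t : seq {set E}) j :
  (j < size t)%N -> seq_union (take j.+1 t) = seq_union (take j t) :|: nth set0 t j.
Proof. move=> hj; by rewrite /seq_union (take_nth set0 hj) -cats1 big_cat big_seq1. Qed.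

Lemma su_sub (E : finType) (s : seq {set E}) Y : Y \in s -> Y \subset seq_union s.
Proof.
elim: s => // a s IH; rewrite inE /seq_union big_cons => /orP [/eqP -> | h].
  exact: subsetUl.
apply: subset_trans (IH h) _; exact: subsetUr.
Qed.

Lemma key (E : finType) (lambda : {set E} -> int) (k : int)
  (T : {set {set E}}) (X Y : {set E}) (t : seq {set E}) :
  connectivity_system lambda -> tangle lambda k T -> strong T X ->
  partial_kseq lambda k T X t ->
  fully_closed lambda k T Y -> X \subset Y -> X :|: seq_union t \subset Y.
Proof.
move=> cs tg sX [_ h2 h3] fY XY.
suff H : forall j, (j <= size t)%N -> X :|: seq_union (take j t) \subset Y.
  by have := H _ (leqnn _); rewrite take_size.
elim=> [|j IH] hj.
  by rewrite take0 /seq_union big_nil setU0.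
have hj' : (j < size t)%N by [].
apply: (fc_step cs tg sX fY XY); first by rewrite subsetUl.
  exact: h3.
have [_ wN _] := h2 _ (mem_nth set0 hj').
apply: weak_sub wN.
rewrite su_take_succ // setUA setDE setIUl.
apply/subUsetP; split; last by rewrite subsetIl.
have := IH (ltnW hj'). rewrite -setD_eq0 setDE => /eqP ->. by rewrite sub0set.
Qed.

Theorem lemma3p6 (E : finType) (lambda : {set E} -> int) (k : int)
  (T : {set {set E}}) (X : {set E}) (s : seq {set E}) :
  connectivity_system lambda ->
  tangle lambda k T ->
  strong T X -> kseparating lambda k X ->
  partial_kseq lambda k T X s ->
  (fcl lambda k T X = X :|: seq_union s <-> maximal_kseq lambda k T X s).
Proof.
move=> cs tg sX kX ps.
have keyF : forall t, partial_kseq lambda k T X t -> X :|: seq_union t \subset fcl lambda k T X.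
  move=> t pt; apply/bigcapsP => Y /andP [fY XY]; exact: key cs tg sX pt fY XY.
split.
  move=> e t pt; rewrite properE -e keyF // andbF //.
move=> mx; apply/eqP; rewrite eqEsubset keyF // andbT.
apply: bigcap_inf; rewrite subsetUl andbT.
have [d1 d2 d3] := ps.
have sZ : strong T (X :|: seq_union s).
  apply/negP => w; move/negP: sX; apply; apply: weak_sub w; exact: subsetUl.
have lZ : lambda (X :|: seq_union s) <= k by have := d3 _ (leqnn _); rewrite take_size.
rewrite /fully_closed sZ lZ /=; apply/forallP => W; apply/implyP => /and3P [W0 wW sW].
apply/negP => lW.
have sWU : forall i, (i < size s)%N -> [disjoint nth set0 s i & W].
  move=> i hi; rewrite -setI_eq0; apply/eqP/setP => x; rewrite !inE.
  apply/negP => /andP [xi xW]; move/subsetP: sW => /(_ x xW); rewrite inE => /negP; apply.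
  rewrite inE; apply/orP; right; apply: (subsetP (su_sub (mem_nth set0 hi))) xi.
have pt : partial_kseq lambda k T X (rcons s W).
  split.
  - move=> i j; rewrite size_rcons => /andP [ij jl].
    have hi : (i < size s)%N by rewrite (leq_trans ij) // -ltnS.
    rewrite !nth_rcons hi.
    case: (ltnP j (size s)) => hj; first by apply: d1; rewrite ij hj.
    have -> : j = size s by apply/eqP; rewrite eqn_leq hj -ltnS jl.
    rewrite eqxx; exact: sWU.
  - move=> Y; rewrite mem_rcons inE => /orP [/eqP -> | hY]; first by rewrite W0 wW (subset_trans sW) // setCS subsetUl.
    exact: d2.
  - move=> j; rewrite size_rcons => hj.
    case: (leqP j (size s)) => hj2.
      rewrite -cats1 takel_cat //; exact: d3.
    have -> : j = (size s).+1 by apply/eqP; rewrite eqn_leq hj hj2.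
    rewrite take_oversize ?size_rcons // /kseparating.
    have eR : seq_union (rcons s W) = seq_union s :|: W by rewrite /seq_union -cats1 big_cat big_seq1.
    by rewrite eR setUA.
have eR : seq_union (rcons s W) = seq_union s :|: W by rewrite /seq_union -cats1 big_cat big_seq1.
have := mx _ pt; apply.
rewrite eR setUA properE subsetUl /=.
apply/negP => hs.
move/negP: W0; apply; apply/eqP/setP => x; rewrite inE.
apply/negP => xW.
have xZ : x \in X :|: seq_union s by apply: (subsetP hs); rewrite inE xW orbT.
by move/subsetP: sW => /(_ x xW); rewrite inE xZ.
Qed.
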